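(* Let $\mathcal{D}=(\Omega,\mathcal{B})$ be a supersimple $2$-$(n,4,\lambda)$ design satisfying property $(\triangle)$, such that $(\Omega,\mathcal{C})$ is a regular two-graph where $\mathcal{C}$ is the set of collinear triples. Then for pairwise distinct $x,y,z\in\Omega$, $$[y,z]\cdot[x,y]\cdot[y,z]=\begin{cases}[x,y]&\text{if }x\in\overline{y,z},\\ [x,z]&\text{otherwise.}\end{cases}$$
   Context: A $2$-$(n,4,\lambda)$ design $(\Omega,\mathcal{B})$: $n$ points, a multiset of $4$-subsets (lines), every $2$-subset in exactly $\lambda$ lines; supersimple: distinct lines meet in at most two points. For distinct $a,b$ with lines $\{a,b,a_i,b_i\}$ through them, $[a,b]:=(a,b)\prod_i(a_i,b_i)\in\operatorname{Sym}(\Omega)$. Permutations act on the right, products composed left to right. For distinct $y,z$, $\overline{y,z}$ is the set of points $w$ such that some line contains $y,z,w$. Property $(\triangle)$: if $B_1,B_2\in\mathcal{B}$ with $|B_1\cap B_2|=2$ then $B_1\triangle B_2\in\mathcal{B}$. Regular two-graph: $(\Omega,\mathcal{C})$ is a $2$-$(n,3,\mu)$ design with every $4$-subset containing $0,2$ or $4$ members of $\mathcal{C}$. *)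

(* Defs.v *)
From mathcomp Require Import all_boot all_order all_fingroup.
Set Implicit Arguments. Unset Strict Implicit. Unset Printing Implicit Defensive.

Section Designs.
Variable T : finType.   (* the point set Omega, n = #|T| *)
Implicit Types (Bs : seq {set T}) (a b x y z w : T).

(* The multiset of lines is a sequence of subsets; a 2-(n,4,lam) design:
   every line has 4 points, every 2-subset lies in exactly lam lines
   (counted with multiplicity). *)
Definition design_2_4 Bs (lam : nat) : Prop :=
  all (fun B : {set T} => #|B| == 4) Bs /\
  forall P : {set T}, #|P| = 2 -> count (fun B : {set T} => P \subset B) Bs = lam.

(* Supersimple: distinct lines (distinct members of the multiset, i.e.
   distinct positions) meet in at most two points. *)
Definition supersimple Bs : Prop :=
  forall i j, i < size Bs -> j < size Bs -> i != j ->
    #|nth set0 Bs i :&: nth set0 Bs j| <= 2.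

Definition prop_triangle Bs : Prop :=
  forall B1 B2, B1 \in Bs -> B2 \in Bs -> #|B1 :&: B2| = 2 ->
    (B1 :\: B2) :|: (B2 :\: B1) \in Bs.

Definition collinear_triples Bs : {set {set T}} :=
  [set S : {set T} | (#|S| == 3) && has (fun B : {set T} => S \subset B) Bs].

Definition regular_two_graph (C : {set {set T}}) : Prop :=
  (forall S, S \in C -> #|S| = 3) /\
  (exists mu : nat, forall P : {set T}, #|P| = 2 ->
       #|[set S in C | P \subset S]| = mu) /\
  (forall Q : {set T}, #|Q| = 4 ->
       #|[set S in C | S \subset Q]| \in [:: 0; 2; 4]).

Definition span2 Bs y z : {set T} :=
  [set w | has (fun B : {set T} => [&& y \in B, z \in B & w \in B]) Bs].

(* For a line B through a and b, the transposition of the two remaining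
   points {a_i, b_i} = B \ {a, b}. *)
Definition other_tperm a b (B : {set T}) : {perm T} :=
  let e := enum (B :\ a :\ b) in tperm (nth a e 0) (nth a e 1).

(* [a,b] := (a,b) * prod_i (a_i,b_i); products in {perm T} compose left to
   right (s * t first applies s), matching permutations acting on the right. *)
Definition brk Bs a b : {perm T} :=
  (tperm a b * \prod_(B <- Bs | (a \in B) && (b \in B)) other_tperm a b B)%g.

End Designs.

(* Main.v *)
Require Import Defs.
From mathcomp Require Import all_boot all_order all_fingroup.
From mathcomp Require Import zify.
From Stdlib Require Import Classical.
Set Implicit Arguments. Unset Strict Implicit. Unset Printing Implicit Defensive.


Section Gen.
Variable T : finType.

Lemma my_card_sub (s : seq T) (A : {set T}) :
  uniq s -> {subset s <= A} -> size s <= #|A|.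
Proof.
move=> us sA; rewrite -(card_uniqP us); apply: subset_leq_card.
by apply/subsetP => t /sA.
Qed.

Lemma mem4 (B : {set T}) a b c d t :
  #|B| = 4 -> uniq [:: a; b; c; d] -> a \in B -> b \in B -> c \in B -> d \in B ->
  t \in B -> t \in [:: a; b; c; d].
Proof.
move=> cB u aB bB cB' dB tB.
have sub : [:: a; b; c; d] \subset B.
  by apply/subsetP => x; rewrite !inE => /or4P[] /eqP->.
have := subset_cardP _ sub; rewrite (card_uniqP u) cB => /(_ erefl) eqs.
by rewrite eqs.
Qed.

Lemma card2E (A : {set T}) u v :
  u != v -> u \in A -> v \in A -> (forall t, t \in A -> (t == u) || (t == v)) ->
  #|A| = 2.
Proof.
move=> uv uA vA H.
have e : A =i [:: u; v].
  move=> t; rewrite !inE; apply/idP/idP; first by move/H.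
  by case/orP => /eqP->.
by rewrite (eq_card e) (card_uniqP _) //= inE uv.
Qed.

End Gen.


Section Spec.
Variable T : finType.
Variables a b : T.
Hypothesis ab : a != b.

Lemma card_mid (B : {set T}) : #|B| = 4 -> a \in B -> b \in B -> #|B :\ a :\ b| = 2.
Proof.
move=> cB aB bB.
have h1 := cardsD1 a B; have h2 := cardsD1 b (B :\ a).
rewrite aB cB in h1; rewrite !inE eq_sym ab bB /= in h2; lia.
Qed.

Lemma ot_spec (B : {set T}) : #|B| = 4 -> a \in B -> b \in B ->
  (forall p, p \notin B :\ a :\ b -> other_tperm a b B p = p) /\
  (forall p q, p \in B :\ a :\ b -> q \in B :\ a :\ b -> p != q -> other_tperm a b B p = q).
Proof.
move=> cB aB bB; rewrite /other_tperm; set S := B :\ a :\ b.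
have cS : size (enum S) = 2 by rewrite -cardE card_mid.
have e0S : nth a (enum S) 0 \in S by rewrite -mem_enum mem_nth // cS.
have e1S : nth a (enum S) 1 \in S by rewrite -mem_enum mem_nth // cS.
have e01 : nth a (enum S) 0 != nth a (enum S) 1 by rewrite nth_uniq ?cS ?enum_uniq.
set e0 := nth a _ 0 in e0S e01 *; set e1 := nth a _ 1 in e1S e01 *.
have allS : forall t, t \in S -> (t == e0) || (t == e1).
  move=> t tS; apply/negPn/negP; rewrite negb_or => /andP[t0 t1].
  have : size [:: t; e0; e1] <= #|S|.
    apply: my_card_sub; first by rewrite /= !inE negb_or t0 t1 e01.
    by apply/allP; rewrite /= tS e0S e1S.
  by rewrite card_mid.
split.
  move=> p pS; apply: tpermD; apply/eqP => E; move: pS; by rewrite -E ?e0S ?e1S.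
move=> p q pS qS pq.
move: pq; case/orP: (allS p pS) => /eqP ->; case/orP: (allS q qS) => /eqP ->;
 by rewrite ?eqxx ?tpermL ?tpermR.
Qed.

Lemma disj (C B : {set T}) p : #|C :&: B| <= 2 -> a \in C -> b \in C -> a \in B -> b \in B ->
  p \in C :\ a :\ b -> p \notin B :\ a :\ b.
Proof.
move=> h aC bC aB bB pC; apply/negP => pB.
have : size [:: a; b; p] <= #|C :&: B|.
  apply: my_card_sub.
    move: (pC); rewrite !inE => /and3P[pb pa _].
    by rewrite /= !inE !negb_or ab (eq_sym a p) (eq_sym b p) pa pb.
  apply/allP; move: pC pB; rewrite /= !inE aC bC aB bB => /and3P[_ _ ->] /and3P[_ _ ->] //.
by move=> /leq_trans/(_ h).
Qed.

Lemma prod_spec (s : seq {set T}) :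
  (forall B, B \in s -> #|B| = 4) -> pairwise (fun B C : {set T} => #|B :&: C| <= 2) s ->
  (forall p, (forall B, B \in s -> a \in B -> b \in B -> p \notin B :\ a :\ b) ->
     (\prod_(B <- s | (a \in B) && (b \in B)) other_tperm a b B)%g p = p) /\
  (forall B p q, B \in s -> a \in B -> b \in B -> p \in B :\ a :\ b -> q \in B :\ a :\ b -> p != q ->
     (\prod_(B <- s | (a \in B) && (b \in B)) other_tperm a b B)%g p = q).
Proof.
elim: s => [|C s IH] c4 pw.
  by rewrite big_nil; split => [p _|B p q]; rewrite ?perm1 ?in_nil.
rewrite pairwise_cons in pw; case/andP: pw => /allP allC pws.
have [IH0 IH1] := IH (fun B h => c4 B (mem_behead (s:=C::s) h)) pws.
rewrite big_cons; case: ifP => [/andP[aC bC]|nC].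
  have [ot0 ot1] := ot_spec (c4 C (mem_head _ _)) aC bC.
  split.
    move=> p H; rewrite permM ot0; last by apply: H; rewrite ?mem_head.
    by apply: IH0 => B Bs aB bB; apply: H; rewrite // inE Bs orbT.
  move=> B p q; rewrite inE => /orP[/eqP->|Bs] aB bB pS qS pq; rewrite permM.
    rewrite (ot1 p q) //; apply: IH0 => B' B's aB' bB'.
    exact: (disj (allC _ B's)).
  rewrite ot0 ?(IH1 B p q) //.
  by apply/negP => h; move: (disj (allC _ Bs) aC bC aB bB h); rewrite pS.
split.
  by move=> p H; apply: IH0 => B Bs; apply: H; rewrite inE Bs orbT.
move=> B p q; rewrite inE => /orP[/eqP->|Bs] aB bB; first by rewrite aB bB in nC.
exact: IH1.
Qed.
End Spec.


Definition Rr (T : finType) (Bs : seq {set T}) a b p q : Prop :=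
  (p = a /\ q = b) \/ (p = b /\ q = a) \/
  (p != q /\ exists2 B, B \in Bs & [&& a \in B, b \in B, p \in B :\ a :\ b & q \in B :\ a :\ b]).

Section BrkSpec.
Variable T : finType.
Variable Bs : seq {set T}.
Hypothesis H4 : forall B, B \in Bs -> #|B| = 4.
Hypothesis Hss : supersimple Bs.

Lemma pw : pairwise (fun B C : {set T} => #|B :&: C| <= 2) Bs.
Proof.
apply/(pairwiseP set0) => i j; rewrite !inE => hi hj ij.
by apply: Hss => //; rewrite ltn_eqF.
Qed.

Lemma brk_R a b p q : a != b -> Rr Bs a b p q -> brk Bs a b p = q.
Proof.
move=> ab; have [P0 P1] := prod_spec ab H4 pw; rewrite /brk permM.
case=> [[-> ->]|[[-> ->]|[pq [B BB /and4P[aB bB pS qS]]]]].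
- rewrite tpermL P0 // => B _ _ _; by rewrite !inE eqxx.
- rewrite tpermR P0 // => B _ _ _; by rewrite !inE eqxx andbF.
- move: (pS); rewrite !inE => /and3P[pb pa _].
  by rewrite tpermD 1?eq_sym // (P1 B p q).
Qed.

Lemma brk_noR a b p : a != b -> (forall q, ~ Rr Bs a b p q) -> brk Bs a b p = p.
Proof.
move=> ab H; have [P0 P1] := prod_spec ab H4 pw; rewrite /brk permM.
have pa : p != a by apply/eqP => E; apply: (H b); left.
have pb : p != b by apply/eqP => E; apply: (H a); right; left.
rewrite tpermD 1?eq_sym // P0 // => B BB aB bB; apply/negP => pS.
have c2 := card_mid ab (H4 BB) aB bB.
have : #|B :\ a :\ b :\ p| = 1 by move: (cardsD1 p (B :\ a :\ b)); rewrite pS c2 /=; lia.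
move/eqP; case/cards1P => q E.
have : q \in B :\ a :\ b :\ p by rewrite E set11.
rewrite in_setD1 => /andP[qp qS].
apply: (H q); right; right; split; first by rewrite eq_sym.
by exists B => //; rewrite aB bB pS qS.
Qed.

Lemma midC (B : {set T}) a b x : (x \in B :\ a :\ b) = (x \in B :\ b :\ a).
Proof. by rewrite !inE andbCA. Qed.

Lemma RrC a b p q : Rr Bs a b p q -> Rr Bs b a p q.
Proof.
case=> [h|[h|[h [B BB /and4P[aB bB pS qS]]]]]; [right;left|left|right;right] => //.
by split=> //; exists B => //; rewrite aB bB -!(midC _ a b) pS qS.
Qed.

Lemma RrS a b p q : Rr Bs a b p q -> Rr Bs a b q p.
Proof.
case=> [[-> ->]|[[-> ->]|[h [B BB /and4P[aB bB pS qS]]]]]; [right;left|left|right;right] => //.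
by split; rewrite 1?eq_sym //; exists B => //; rewrite aB bB pS qS.
Qed.

Lemma exists_other (B : {set T}) a b p : B \in Bs -> a != b -> a \in B -> b \in B ->
  p \in B :\ a :\ b -> exists q, q \in B :\ a :\ b /\ q != p.
Proof.
move=> BB ab aB bB pS.
have c2 := card_mid ab (H4 BB) aB bB.
have : #|B :\ a :\ b :\ p| = 1 by move: (cardsD1 p (B :\ a :\ b)); rewrite pS c2 /=; lia.
move/eqP; case/cards1P => q E.
have : q \in B :\ a :\ b :\ p by rewrite E set11.
by rewrite in_setD1 => /andP[qp qS]; exists q.
Qed.

End BrkSpec.


Definition colb (T : finType) (Bs : seq {set T}) p q r :=
  has (fun B : {set T} => [&& p \in B, q \in B & r \in B]) Bs.

Lemma uniq3 (T : eqType) (a b c : T) : a != b -> a != c -> b != c -> uniq [:: a; b; c].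
Proof. by move=> ab ac bc; rewrite /= !inE !negb_or ab ac bc. Qed.
Lemma uniq4 (T : eqType) (a b c d : T) : a != b -> a != c -> a != d -> b != c -> b != d -> c != d ->
  uniq [:: a; b; c; d].
Proof. by move=> ab ac ad bc bd cd; rewrite /= !inE !negb_or ab ac ad bc bd cd. Qed.
Lemma memN (T : finType) (A : {set T}) u v : u \in A -> v \notin A -> u != v.
Proof. by move=> uA; apply: contraNneq => <-. Qed.

Lemma uniq4E (T : eqType) (a b c d : T) : uniq [:: a; b; c; d] ->
  [/\ a != b, a != c, a != d & [/\ b != c, b != d & c != d]].
Proof. by rewrite /= !inE !negb_or => /andP[/and3P[-> -> ->] /andP[/andP[-> ->] /andP[-> _]]]; split. Qed.

Lemma inSD1 (T : finType) (A B : {set T}) t : t \in A -> t \notin B -> t \in (A :\: B) :|: (B :\: A).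
Proof. by move=> tA tB; rewrite !inE tA (negbTE tB). Qed.
Lemma inSD2 (T : finType) (A B : {set T}) t : t \in B -> t \notin A -> t \in (A :\: B) :|: (B :\: A).
Proof. by move=> tB tA; rewrite !inE tB (negbTE tA) orbT. Qed.
Lemma notSD (T : finType) (A B : {set T}) t : t \in A -> t \in B -> t \notin (A :\: B) :|: (B :\: A).
Proof. by move=> tA tB; rewrite !inE tA tB. Qed.

Ltac ctr := solve [ match goal with
  | H1 : is_true (?a \in ?B), H2 : is_true (~~ (?a \in ?B)) |- _ => by rewrite H1 in H2
  | H : is_true (?a != ?a) |- _ => by rewrite eqxx in H
  end ].

Section Comb.
Variable T : finType.
Variable Bs : seq {set T}.
Hypothesis H4 : forall B, B \in Bs -> #|B| = 4.
Hypothesis Hss : supersimple Bs.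
Hypothesis Htri : prop_triangle Bs.
Hypothesis Hpar : forall a b c d : T, uniq [:: a; b; c; d] ->
  ~~ odd (colb Bs b c d + colb Bs a c d + colb Bs a b d + colb Bs a b c).

Lemma colb_12 a b c : colb Bs a b c = colb Bs b a c.
Proof. by apply: eq_has => B; rewrite andbA (andbC (a \in B)) andbA. Qed.
Lemma colb_23 a b c : colb Bs a b c = colb Bs a c b.
Proof. by apply: eq_has => B; rewrite (andbC (b \in B)). Qed.
Lemma colbI (B : {set T}) a b c : B \in Bs -> a \in B -> b \in B -> c \in B -> colb Bs a b c.
Proof. by move=> BB aB bB cB; apply/hasP; exists B => //; rewrite aB bB cB. Qed.

Lemma eq3 (B C : {set T}) u v w : B \in Bs -> C \in Bs -> uniq [:: u; v; w] ->
  u \in B -> v \in B -> w \in B -> u \in C -> v \in C -> w \in C -> B = C.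
Proof.
move=> BB CB uq uB vB wB uC vC wC.
have h : size [:: u; v; w] <= #|B :&: C|.
  by apply: my_card_sub => //; apply/allP; rewrite /= !inE uB vB wB uC vC wC.
have iB := nth_index set0 BB; have jC := nth_index set0 CB.
case: (eqVneq (index B Bs) (index C Bs)) => ij.
  by rewrite -iB ij jC.
have := Hss _ _ ij; rewrite !index_mem iB jC => /(_ BB CB) h2.
by have := leq_trans h h2.
Qed.

Lemma triI (B C : {set T}) : B \in Bs -> C \in Bs -> #|B :&: C| = 2 ->
  (B :\: C) :|: (C :\: B) \in Bs.
Proof. by move=> *; apply: Htri. Qed.

Lemma mkR (B : {set T}) x y u v : B \in Bs -> u != v -> u != x -> u != y -> v != x -> v != y ->
  x \in B -> y \in B -> u \in B -> v \in B -> Rr Bs x y u v.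
Proof.
move=> BB uv ux uy vx vy xB yB uB vB; right; right; split => //.
by exists B => //; rewrite !inE xB yB uB vB ux uy vx vy.
Qed.

Section Sigma.
Variables x y z : T.
Hypotheses (xy : x != y) (yz : y != z) (xz : x != z).
Variable s : T -> T.
Hypothesis sR : forall p q, Rr Bs y z p q -> s p = q.
Hypothesis sN : forall p, (forall q, ~ Rr Bs y z p q) -> s p = p.

Lemma sy : s y = z. Proof. by apply: sR; left. Qed.
Lemma sz : s z = y. Proof. by apply: sR; right; left. Qed.

Lemma sig_line p : p != y -> p != z -> colb Bs y z p ->
  exists2 B, B \in Bs & [&& y \in B, z \in B, p \in B, s p \in B, s p != y, s p != z & s p != p].
Proof.
move=> py pz /hasP[B BB /and3P[yB zB pB]].
have pS : p \in B :\ y :\ z by rewrite !inE pB py pz.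
have [q [qS qp]] := exists_other H4 BB yz yB zB pS.
have -> : s p = q.
  apply: sR; right; right; split; first by rewrite eq_sym.
  by exists B => //; rewrite yB zB pS qS.
move: qS; rewrite !inE => /and3P[qz qy qB].
by exists B => //; rewrite yB zB pB qB qy qz qp.
Qed.

Lemma sig_fix p : p != y -> p != z -> ~~ colb Bs y z p -> s p = p.
Proof.
move=> py pz nc; apply: sN => q.
case=> [[E _]|[[E _]|[_ [B BB /and4P[yB zB pS _]]]]].
- by rewrite E eqxx in py.
- by rewrite E eqxx in pz.
- by move: pS nc; rewrite !inE => /and3P[_ _ pB]; rewrite (colbI BB yB zB pB).
Qed.


Lemma nxyz : colb Bs x y z = colb Bs y z x.
Proof. by rewrite colb_23 colb_12 colb_23 colb_12. Qed.

Lemma case2_K (C : {set T}) p q : ~~ colb Bs y z x -> C \in Bs -> x \in C -> z \in C ->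
  p \in C -> q \in C -> uniq [:: x; z; p; q] -> y \notin C -> colb Bs y z p ->
  Rr Bs x y (s p) (s q).
Proof.
move=> nx CB xC zC pC qC u yC cp.
have [xz' xp xq [zp zq pq]] := uniq4E u.
have py := memN pC yC; have qy := memN qC yC.
have [B' B'B /and4P[yB' zB' pB' /and4P[spB' spy spz spp]]] :=
  sig_line py ltac:(by rewrite eq_sym) cp.
have xB' : x \notin B' by apply/negP => xB'; move: nx; rewrite (colbI B'B yB' zB' xB').
have qB' : q \notin B'.
  apply/negP => qB'; have E := eq3 CB B'B (uniq3 zp zq pq) zC pC qC zB' pB' qB'.
  by move: xB'; rewrite -E xC.
have spC : s p \notin C.
  apply/negP => spC; have := mem4 (H4 CB) u xC zC pC qC spC.
  rewrite !inE => /or4P[]/eqP E; rewrite E in spB' spy spz spp; ctr.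
have c2 : #|C :&: B'| = 2.
  apply: (card2E zp); rewrite ?inE ?zC ?zB' ?pC ?pB' // => t; rewrite inE => /andP[tC tB'].
  have := mem4 (H4 CB) u xC zC pC qC tC.
  by rewrite !inE => /or4P[]/eqP E; subst t; rewrite ?eqxx ?orbT //; ctr.
have EB := triI CB B'B c2.
have xE := inSD1 xC xB'; have qE := inSD1 qC qB'.
have yE := inSD2 yB' yC; have spE := inSD2 spB' spC.
have ncq : colb Bs y z q = false.
  have := Hpar (uniq4 xy xz xq yz ltac:(by rewrite eq_sym) zq).
  rewrite (colbI CB xC zC qC) (colbI EB xE yE qE) nxyz (negbTE nx).
  by case: (colb Bs y z q).
rewrite (sig_fix qy ltac:(by rewrite eq_sym) (negbT ncq)).
apply: (mkR EB _ _ _ _ _ xE yE spE qE) => //.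
- exact: memN spB' qB'.
- exact: memN spB' xB'.
- by rewrite eq_sym.
Qed.

Lemma case2 p q : ~~ colb Bs y z x -> Rr Bs x z p q -> Rr Bs x y (s p) (s q).
Proof.
move=> nx; have sx : s x = x := sig_fix xy xz nx.
case=> [[-> ->]|[[-> ->]|[pq [C CB /and4P[xC zC pS qS]]]]].
- by rewrite sx sz; left.
- by rewrite sx sz; right; left.
move: pS qS; rewrite !inE => /and3P[pz px pC] /and3P[qz qx qC].
have yC : y \notin C by apply/negP => yC; move: nx; rewrite (colbI CB yC zC xC).
have py := memN pC yC; have qy := memN qC yC.
have u : uniq [:: x; z; p; q].
  by apply: uniq4; rewrite // eq_sym.
case cp: (colb Bs y z p); first exact: (case2_K nx CB xC zC pC qC u yC cp).
case cq: (colb Bs y z q).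
  apply: RrS; apply: (case2_K nx CB xC zC qC pC _ yC cq).
  by apply: uniq4; rewrite // eq_sym.
rewrite (sig_fix py pz (negbT cp)) (sig_fix qy qz (negbT cq)).
have cxp : colb Bs x y p.
  have := Hpar ((@uniq4 _ x y z p) xy xz ltac:(by rewrite eq_sym px) yz ltac:(by rewrite eq_sym) ltac:(by rewrite eq_sym)).
  rewrite cp (colbI CB xC zC pC) nxyz (negbTE nx).
  by case: (colb Bs x y p).
case/hasP: cxp => D DB /and3P[xD yD pD].
have zD : z \notin D by apply/negP => zD; move: nx; rewrite (colbI DB yD zD xD).
case qD: (q \in D).
  by apply: (mkR DB _ _ _ _ _ xD yD pD qD); rewrite // (memN qC yC).
have c2 : #|D :&: C| = 2.
  apply: (card2E (u:=x) (v:=p)); rewrite ?inE ?xD ?xC ?pD ?pC ?(eq_sym x) // => t.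
  rewrite inE => /andP[tD tC]; have := mem4 (H4 CB) u xC zC pC qC tC.
  rewrite !inE => /or4P[]/eqP E; subst t; rewrite ?eqxx ?orbT //; try ctr.
  by rewrite tD in qD.
have ED := triI DB CB c2.
move: cq; rewrite (colbI ED (inSD1 yD yC) (inSD2 zC zD) (inSD2 qC (negbT qD))).
done.
Qed.


Lemma case1_K (B : {set T}) p q : B \in Bs -> x \in B -> y \in B -> p \in B -> q \in B ->
  uniq [:: x; y; p; q] -> z \notin B -> colb Bs y z x -> colb Bs y z p ->
  Rr Bs x y (s p) (s q).
Proof.
move=> BB xB yB pB qB u zB cx cp.
have [xy' xp xq [yp yq pq]] := uniq4E u.
have pz := memN pB zB; have qz := memN qB zB.
have [B' B'B /and4P[yB' zB' pB' /and4P[spB' spy spz spp]]] :=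
  sig_line (p:=p) ltac:(by rewrite eq_sym) pz cp.
have xB' : x \notin B'.
  apply/negP => xB'; have E := eq3 BB B'B (uniq3 xy' xp yp) xB yB pB xB' yB' pB'.
  by move: zB; rewrite E zB'.
have qB' : q \notin B'.
  apply/negP => qB'; have E := eq3 BB B'B (uniq3 yp yq pq) yB pB qB yB' pB' qB'.
  by move: zB; rewrite E zB'.
have spB : s p \notin B.
  apply/negP => spB; have := mem4 (H4 BB) u xB yB pB qB spB.
  rewrite !inE => /or4P[]/eqP E; rewrite E in spB' spy spz spp; ctr.
have c2 : #|B :&: B'| = 2.
  apply: (card2E yp); rewrite ?inE ?yB ?yB' ?pB ?pB' // => t; rewrite inE => /andP[tB tB'].
  have := mem4 (H4 BB) u xB yB pB qB tB.
  by rewrite !inE => /or4P[]/eqP E; subst t; rewrite ?eqxx ?orbT //; ctr.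
have EB := triI BB B'B c2.
set E := (B :\: B') :|: (B' :\: B) in EB.
have xE : x \in E := inSD1 xB xB'; have qE : q \in E := inSD1 qB qB'.
have zE : z \in E := inSD2 zB' zB; have spE : s p \in E := inSD2 spB' spB.
have yE : y \notin E := notSD yB yB'.
have cq : colb Bs y z q.
  have := Hpar (uniq4 xy xz xq yz yq ltac:(by rewrite eq_sym)).
  rewrite (colbI EB xE zE qE) (colbI BB xB yB qB) nxyz cx.
  by case: (colb Bs y z q).
have [B'' B''B /and4P[yB'' zB'' qB'' /and4P[sqB'' sqy sqz sqq]]] :=
  sig_line (p:=q) ltac:(by rewrite eq_sym) qz cq.
have xB'' : x \notin B''.
  apply/negP => xB''; have E' := eq3 BB B''B (uniq3 xy' xq yq) xB yB qB xB'' yB'' qB''.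
  by move: zB; rewrite E' zB''.
have spB'' : s p \notin B''.
  apply/negP => spB''.
  have E' := eq3 B'B B''B ((@uniq3 _ y z (s p)) yz ltac:(by rewrite eq_sym) ltac:(by rewrite eq_sym)) yB' zB' spB' yB'' zB'' spB''.
  by move: qB'; rewrite E' qB''.
have u2 : uniq [:: x; q; z; s p].
  apply: uniq4 => //; rewrite ?(memN xB spB) ?(memN qB spB) //; by rewrite eq_sym.
have sqE : s q \notin E.
  apply/negP => sqE; have := mem4 (H4 EB) u2 xE qE zE spE sqE.
  rewrite !inE => /or4P[]/eqP E'; rewrite E' in sqB'' sqy sqz sqq; ctr.
have c2' : #|E :&: B''| = 2.
  apply: (card2E (u:=z) (v:=q)); rewrite ?in_setI ?zE ?zB'' ?qE ?qB'' ?(eq_sym z) // => t.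
  rewrite in_setI => /andP[tE tB''].
  have := mem4 (H4 EB) u2 xE qE zE spE tE.
  by rewrite !inE => /or4P[]/eqP E'; subst t; rewrite ?eqxx ?orbT //; ctr.
have FB := triI EB B''B c2'.
apply: (mkR FB _ _ _ _ _ (inSD1 xE xB'') (inSD2 yB'' yE) (inSD1 spE spB'') (inSD2 sqB'' sqE)) => //.
- by rewrite eq_sym (memN sqB'' spB'').
- exact: memN spB' xB'.
- exact: memN sqB'' xB''.
Qed.

Lemma case1 p q : colb Bs y z x -> Rr Bs x y p q -> Rr Bs x y (s p) (s q).
Proof.
move=> cx.
have [L LB /and4P[yL zL xL /and4P[sxL sxy sxz sxx]]] := sig_line xy xz cx.
have RL : Rr Bs x y (s x) z.
  by apply: (mkR LB) => //; rewrite eq_sym.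
case=> [[-> ->]|[[-> ->]|[pq [B BB /and4P[xB yB pS qS]]]]].
- by rewrite sy.
- by rewrite sy; apply: RrS.
move: pS qS; rewrite !inE => /and3P[py px pB] /and3P[qy qx qB].
have u : uniq [:: x; y; p; q] by apply: uniq4; rewrite // eq_sym.
case zB: (z \in B).
  have := mem4 (H4 BB) u xB yB pB qB zB.
  rewrite !inE => /or4P[]/eqP E.
  - by move: xz; rewrite E eqxx.
  - by move: yz; rewrite E eqxx.
  - subst p; rewrite sz (sR (q:=x)); first by right; left.
    apply: RrS; apply: (mkR BB) => //; by rewrite eq_sym.
  - subst q; rewrite sz (sR (q:=x)); first by left.
    apply: RrS; apply: (mkR BB) => //; by rewrite eq_sym.
case cp: (colb Bs y z p); first exact: (case1_K BB xB yB pB qB u (negbT zB) cx cp).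
case cq: (colb Bs y z q).
  apply: RrS; apply: (case1_K BB xB yB qB pB _ (negbT zB) cx cq).
  by apply: uniq4; rewrite // eq_sym.
have pz := memN pB (negbT zB); have qz := memN qB (negbT zB).
rewrite (sig_fix py pz (negbT cp)) (sig_fix qy qz (negbT cq)).
by apply: (mkR BB).
Qed.

End Sigma.
End Comb.


Lemma card_filter_set (T : finType) (s : seq {set T}) (P : pred {set T}) :
  uniq s -> #|[set S in s | P S]| = count P s.
Proof.
move=> u; rewrite -size_filter -(card_uniqP (filter_uniq P u)) -cardsE.
by apply: eq_card => S; rewrite !inE mem_filter andbC.
Qed.

Lemma parity (T : finType) (Bs : seq {set T}) :
  regular_two_graph (collinear_triples Bs) ->
  forall a b c d : T, uniq [:: a; b; c; d] ->
  ~~ odd (colb Bs b c d + colb Bs a c d + colb Bs a b d + colb Bs a b c).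
Proof.
case=> _ [_ H] a b c d u.
set Q := [set t in [:: a; b; c; d]].
have cQ : #|Q| = 4 by rewrite cardsE (card_uniqP u).
have QE t : (t \in Q) = (t \in [:: a; b; c; d]) by rewrite inE.
have aQ : a \in Q by rewrite QE !inE eqxx.
have bQ : b \in Q by rewrite QE !inE eqxx !orbT.
have cQ' : c \in Q by rewrite QE !inE eqxx !orbT.
have dQ : d \in Q by rewrite QE !inE eqxx !orbT.
have nD x y : x \in Q -> y \in Q -> x != y -> (Q :\ x == Q :\ y) = false.
  move=> xQ yQ xy; apply/negP => /eqP E.
  have : y \in Q :\ x by rewrite in_setD1 eq_sym xy yQ.
  by rewrite E in_setD1 eqxx.
have [ab ac ad [bc bd cd]] := uniq4E u.
have us : uniq [:: Q :\ a; Q :\ b; Q :\ c; Q :\ d].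
  by apply: uniq4; rewrite nD.
have E : [set S in collinear_triples Bs | S \subset Q] =
         [set S in [:: Q :\ a; Q :\ b; Q :\ c; Q :\ d] | S \in collinear_triples Bs].
  apply/setP => S; rewrite [LHS]inE [RHS]inE; apply/andP/andP.
    case=> SC sQ; split => //.
    move: (SC); rewrite inE => /andP[/eqP c3 _].
    have : #|Q :\: S| == 1 by rewrite cardsD (setIidPr sQ) cQ c3.
    case/cards1P => e De.
    have eQS : e \in Q :\: S by rewrite De set11.
    have SE : S = Q :\ e.
      apply/setP => t; rewrite in_setD1; apply/idP/andP.
        move=> tS; split; last by move/subsetP: sQ; apply.
        by apply/eqP => te; move: eQS; rewrite -te inE tS.
      case=> te tQ; apply/negPn/negP => tS.
      have : t \in Q :\: S by rewrite inE tS tQ.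
      by rewrite De inE (negbTE te).
    move: eQS; rewrite inE => /andP[_]; rewrite QE !inE SE.
    by case/or4P => /eqP->; rewrite eqxx ?orbT.
  case=> hl SC; split => //; move: hl.
  by rewrite ?inE => /or4P[]/eqP->; apply: subD1set.
have := H Q cQ; rewrite E card_filter_set //=.
have cl x y z w : w \in Q -> (forall t, (t \in Q :\ w) = (t \in [:: x; y; z])) ->
   (Q :\ w \in collinear_triples Bs) = colb Bs x y z.
  move=> wQ mE; rewrite inE.
  have c3 : #|Q :\ w| = 3 by move: (cardsD1 w Q); rewrite wQ cQ /=; lia.
  rewrite c3 eqxx /=; apply: eq_has => B; apply/subsetP/and3P.
    by move=> h; split; apply: h; rewrite mE !inE eqxx ?orbT.
  by case=> xB yB zB t; rewrite mE !inE => /or3P[]/eqP->.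
have ab' := negbTE ab.
have ba' : (b == a) = false by rewrite eq_sym ab'.
have ac' := negbTE ac.
have ca' : (c == a) = false by rewrite eq_sym ac'.
have ad' := negbTE ad.
have da' : (d == a) = false by rewrite eq_sym ad'.
have bc' := negbTE bc.
have cb' : (c == b) = false by rewrite eq_sym bc'.
have bd' := negbTE bd.
have db' : (d == b) = false by rewrite eq_sym bd'.
have cd' := negbTE cd.
have dc' : (d == c) = false by rewrite eq_sym cd'.
have R := (ab', ac', ad', bc', bd', cd', ba', ca', da', cb', db', dc').
rewrite (cl b c d a aQ) ?(cl a c d b bQ) ?(cl a b d c cQ') ?(cl a b c d dQ).
- by rewrite !inE !addnA addn0 => /or3P[]/eqP->.
all: move=> t; rewrite in_setD1 QE !inE; first [ by case: (t =P a) => [->|_] /=; rewrite ?eqxx ?R ?orbF | by case: (t =P b) => [->|_] /=; rewrite ?eqxx ?R ?orbF | by case: (t =P c) => [->|_] /=; rewrite ?eqxx ?R ?orbF | by case: (t =P d) => [->|_] /=; rewrite ?eqxx ?R ?orbF ].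
Qed.

Unset Implicit Arguments.

Lemma finish (T : finType) (Bs : seq {set T}) (sg tau rho : {perm T}) x y c :
  (forall p, sg (sg p) = p) ->
  (forall p q, Rr Bs x y p q -> tau p = q) ->
  (forall p, (forall q, ~ Rr Bs x y p q) -> tau p = p) ->
  (forall p q, Rr Bs x c p q -> rho p = q) ->
  (forall p, (forall q, ~ Rr Bs x c p q) -> rho p = p) ->
  (forall p q, Rr Bs x c p q -> Rr Bs x y (sg p) (sg q)) ->
  (forall p q, Rr Bs x y p q -> Rr Bs x c (sg p) (sg q)) ->
  (sg * tau * sg)%g = rho.
Proof.
move=> sI tR tN rR rN D D'; apply/permP => p; rewrite !permM.
case: (classic (exists q, Rr Bs x c p q)) => [[q hq]|nq].
  by rewrite (rR _ _ hq) (tR _ _ (D _ _ hq)) sI.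
have nq' : forall q, ~ Rr Bs x c p q by move=> q hq; apply: nq; exists q.
rewrite (rN _ nq') (tN (sg p)) ?sI // => r hr; apply: (nq' (sg r)).
by have := D' _ _ hr; rewrite sI.
Qed.

Theorem lemma4p4 (T : finType) (Bs : seq {set T}) (lam : nat) :
  design_2_4 Bs lam ->
  supersimple Bs ->
  prop_triangle Bs ->
  regular_two_graph (collinear_triples Bs) ->
  forall x y z : T, x != y -> y != z -> x != z ->
    (brk Bs y z * brk Bs x y * brk Bs y z)%g =
    (if x \in span2 Bs y z then brk Bs x y else brk Bs x z).
Proof.
move=> [H4all _] Hss Htri Hrt x y z xy yz xz.
have H4 : forall B, B \in Bs -> #|B| = 4 by move=> B /(allP H4all)/eqP.
have Hpar := parity Hrt.
have zy : z != y by rewrite eq_sym.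
have sR := brk_R H4 Hss yz.
have sN := brk_noR H4 Hss yz.
have sR' : forall p q, Rr Bs z y p q -> brk Bs y z p = q.
  by move=> p q h; apply: sR; apply: RrC.
have sN' : forall p, (forall q, ~ Rr Bs z y p q) -> brk Bs y z p = p.
  by move=> p h; apply: sN => q hq; apply: (h q); apply: RrC.
have sI : forall p, brk Bs y z (brk Bs y z p) = p.
  move=> p; case: (classic (exists q, Rr Bs y z p q)) => [[q hq]|nq].
    by rewrite (sR _ _ hq); apply: sR; apply: RrS.
  have nq' : forall q, ~ Rr Bs y z p q by move=> q hq; apply: nq; exists q.
  by rewrite !(sN _ nq').
have hx : (x \in span2 Bs y z) = colb Bs y z x by rewrite inE.
rewrite hx; case: ifP => cx.
  apply: finish => //.
  - by move=> p q; apply: (brk_R H4 Hss xy).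
  - by move=> p; apply: (brk_noR H4 Hss xy).
  - by move=> p q; apply: (brk_R H4 Hss xy).
  - by move=> p; apply: (brk_noR H4 Hss xy).
  - by move=> p q; apply: (case1 H4 Hss Htri Hpar xy yz xz sR sN).
  - by move=> p q; apply: (case1 H4 Hss Htri Hpar xy yz xz sR sN).
apply: finish => //.
- by move=> p q; apply: (brk_R H4 Hss xy).
- by move=> p; apply: (brk_noR H4 Hss xy).
- by move=> p q; apply: (brk_R H4 Hss xz).
- by move=> p; apply: (brk_noR H4 Hss xz).
- by move=> p q; apply: (case2 H4 Hss Htri Hpar xy yz xz sR sN); rewrite cx.
- move=> p q; apply: (case2 H4 Hss Htri Hpar xz zy xy sR' sN').
  by rewrite colb_12 cx.
Qed.
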